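(* For all positive integers $\Delta$ and positive reals $\beta$ and $\mu_S$ there is $\mu_T>0$ such that the following holds. Let $S$ and $T$ be disjoint sets, $\mathcal{S}\subseteq\binom{S}{\Delta}$ a family of pairwise disjoint $\Delta$-sets in $S$ with $|\mathcal{S}|\le\frac1\Delta(1-\mu_S)|T|$, and $\mathcal{T}\subseteq\binom{T}{\Delta}$ a family of $\Delta$-sets in $T$ with $|\mathcal{T}|\le\mu_T|T|^\Delta$. Then a uniformly random injective function $f:S\to T$ satisfies $|f(\mathcal{S})\setminus\mathcal{T}|>(1-\beta)|\mathcal{S}|$ with probability at least $1-\beta^{|\mathcal{S}|}$.
   Context: $f(\mathcal{S})$ denotes the family $\{f(A):A\in\mathcal{S}\}$ of images of the sets in $\mathcal{S}$; $\binom{S}{\Delta}$ is the family of $\Delta$-element subsets of $S$. *)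

(* Defs.v *)
From HB Require Import structures.
From mathcomp Require Import all_boot all_order all_algebra.
From mathcomp Require Import reals.
Set Implicit Arguments. Unset Strict Implicit. Unset Printing Implicit Defensive.
Import Order.TTheory GRing.Theory Num.Theory.

Definition image_family (S T : finType) (f : S -> T) (SS : {set {set S}})
  : {set {set T}} := [set f @: (A : {set S}) | A in SS].

Definition n_inj (S T : finType) (P : {ffun S -> T} -> bool) : nat :=
  #|[set f : {ffun S -> T} | injectiveb f && P f]|.

(* Main.v *)
Require Import Defs.
From HB Require Import structures.
From mathcomp Require Import all_boot all_order all_algebra.
From mathcomp Require Import reals.
From mathcomp Require Import zify ring lra.
Import Order.TTheory GRing.Theory Num.Theory.
Set Implicit Arguments. Unset Strict Implicit. Unset Printing Implicit Defensive.

Definition pinj (D T : finType) (V : {set D}) (f : {ffun D -> option T}) : bool :=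
  [forall x, (f x != None) == (x \in V)] &&
  [forall x, forall y, (x \in V) ==> (f x == f y) ==> (x == y)].

Definition Inj (D T : finType) (V : {set D}) : {set {ffun D -> option T}} :=
  [set f | pinj V f].
Arguments Inj {D T} V.

Definition rst (D T : finType) (f : {ffun D -> option T}) (V : {set D}) : {ffun D -> option T} :=
  [ffun x => if x \in V then f x else None].

Definition img (D T : finType) (f : {ffun D -> option T}) (A : {set D}) : {set T} :=
  [set t | Some t \in f @: A].

Lemma InjP (D T : finType) (V : {set D}) (f : {ffun D -> option T}) :
  reflect ((forall x, (f x != None) = (x \in V)) /\
           (forall x y, x \in V -> f x = f y -> x = y)) (f \in Inj V).
Proof.
rewrite inE /pinj; apply: (iffP andP) => [[/forallP H1 /forallP H2]|[H1 H2]]; split.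
- by move=> x; exact: (eqP (H1 x)).
- by move=> x y xV fxy; move/forallP: (H2 x) => /(_ y); rewrite xV fxy eqxx => /eqP.
- by apply/forallP => x; rewrite H1.
- apply/forallP=> x; apply/forallP=> y; apply/implyP=> xV; apply/implyP=> /eqP e.
  by rewrite (H2 _ _ xV e).
Qed.

Lemma rst_Inj (D T : finType) (V W : {set D}) (f : {ffun D -> option T}) :
  V \subset W -> f \in Inj W -> rst f V \in Inj V.
Proof.
move=> sVW /InjP [H1 H2]; apply/InjP; split.
- move=> x; rewrite /rst ffunE; case: ifP => xV //.
  by rewrite H1 (subsetP sVW).
- move=> x y xV; rewrite /rst !ffunE xV; case: ifP => yV e.
  + by apply: H2 (subsetP sVW _ xV) e.
  + by move: (H1 x); rewrite e eqxx (subsetP sVW _ xV).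
Qed.

Lemma img_rst (D T : finType) (f : {ffun D -> option T}) (V B : {set D}) :
  B \subset V -> img (rst f V) B = img f B.
Proof.
move=> sBV; rewrite /img; apply/setP => t; rewrite !inE.
by rewrite (@eq_in_imset _ _ _ (fun x => f x)) // => x xB; rewrite /rst ffunE (subsetP sBV).
Qed.

Lemma card_bigcup_le (I X : finType) (P : pred I) (E : I -> {set X}) :
  #|\bigcup_(i | P i) E i| <= \sum_(i | P i) #|E i|.
Proof.
elim/big_rec2: _ => [|i n U _ leUn]; first by rewrite cards0.
by rewrite (leq_trans (leq_card_setU _ _).1) // leq_add2l.
Qed.

Lemma pinjP (D T : finType) (V : {set D}) (f : {ffun D -> option T}) :
  reflect ((forall x, (f x != None) = (x \in V)) /\
           (forall x y, x \in V -> f x = f y -> x = y)) (pinj V f).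
Proof. by have := InjP V f; rewrite inE. Qed.

Lemma fiber_le (D T : finType) (V : {set D}) (x : D) (g : {ffun D -> option T}) :
  x \notin V -> g \in Inj V ->
  #|[set f in Inj (x |: V) | rst f V == g]| <= #|T| - #|V|.
Proof.
move=> xV /InjP [G1 G2].
set F := [set f in _ | _].
have injF : {in F &, injective (fun f : {ffun D -> option T} => f x)}.
  move=> f1 f2; rewrite !inE => /andP [/pinjP [A1 _] /eqP r1] /andP [/pinjP [B1 _] /eqP r2] e.
  apply/ffunP => y; case: (boolP (y \in V)) => yV.
    by move/ffunP: r1 => /(_ y); move/ffunP: r2 => /(_ y); rewrite !ffunE yV => -> ->.
  case: (eqVneq y x) => [->//|nyx].
  have: y \notin x |: V by rewrite !inE negb_or nyx.
  move=> nyW; move: (A1 y) (B1 y); rewrite (negbTE nyW).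
  by move/negbFE/eqP => -> /negbFE/eqP ->.
rewrite -(card_in_imset injF).
have sub : ((fun f : {ffun D -> option T} => f x) @: F) \subset ~: (None |: [set g y | y in V]).
  apply/subsetP => o /imsetP [f]; rewrite !inE => /andP [/pinjP [A1 A2] /eqP r] ->.
  rewrite negb_or; apply/andP; split.
    by rewrite A1 !inE eqxx.
  apply/imsetP => -[y yV e].
  have : g y = f y by rewrite -r /rst ffunE yV.
  move=> gy; rewrite gy in e.
  have := A2 x y; rewrite !inE eqxx => /(_ isT e) exy.
  by move: xV; rewrite exy yV.
apply: (leq_trans (subset_leq_card sub)).
have := cardsC (None |: [set g y | y in V]); rewrite card_option.
rewrite cardsU1 (card_in_imset (fun a b aV _ => G2 a b aV)).
have -> : None \notin [set g y | y in V].
  by apply/imsetP => -[y yV e]; move: (G1 y); rewrite -e eqxx yV.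
move=> E; lia.
Qed.

Lemma ext_le (D T : finType) (V : {set D}) (x : D) (P : pred {ffun D -> option T}) :
  x \notin V ->
  #|[set f in Inj (x |: V) | P (rst f V)]| <= (#|T| - #|V|) * #|[set g in Inj V | P g]|.
Proof.
move=> xV.
rewrite -sum1_card (partition_big (fun f => rst f V) (fun g => g \in [set g in Inj V | P g])); last first.
  move=> f; rewrite inE => /andP [fI Pf].
  by have := rst_Inj (subsetUr [set x] V) fI; rewrite !inE Pf andbT => ->.
rewrite mulnC -sum_nat_const; apply: leq_sum => g gG.
have gI : g \in Inj V.
  by move: gG; rewrite inE => /andP [].
apply: leq_trans (fiber_le xV gI).
rewrite sum1dep_card; apply: subset_leq_card; apply/subsetP => f.
by rewrite !inE => /andP [/andP [-> _] ->].
Qed.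

Lemma phase2 (D T : finType) (U : {set D}) (C : pred {ffun D -> option T}) :
  (forall (V : {set D}) (f : {ffun D -> option T}), U \subset V -> C (rst f V) = C f) ->
  forall n (W : {set D}), U \subset W -> #|W| = #|U| + n ->
  #|[set f in Inj W | C f]| <= #|[set f in Inj U | C f]| * (#|T| - #|U|) ^_ n.
Proof.
move=> HC; elim=> [|n IH] W sUW cW.
  have -> : W = U by apply/eqP; rewrite eq_sym eqEcard sUW cW addn0 leqnn.
  by rewrite ffactn0 muln1.
have : ~~ (W \subset U).
  by apply/negP => sWU; move: (subset_leq_card sWU); rewrite cW; lia.
case/subsetPn => x xW xU.
set V := W :\ x.
have sUV : U \subset V.
  apply/subsetP => y yU; rewrite !inE (subsetP sUW _ yU) andbT.
  by apply/eqP => e; move: xU; rewrite -e yU.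
have cV : #|V| = #|U| + n by move: cW; rewrite (cardsD1 x W) xW add1n addnS => -[].
have xV : x \notin V by rewrite !inE eqxx.
have eW : W = x |: V by rewrite setD1K.
have -> : [set f in Inj W | C f] = [set f in Inj (x |: V) | C (rst f V)].
  by apply/setP => f; rewrite -eW !inE (HC _ _ sUV).
apply: (leq_trans (ext_le _ xV)).
rewrite ffactnSr mulnA [X in _ <= X]mulnC cV subnDA.
by apply: leq_mul => //; apply: IH.
Qed.

Lemma block_le (D T : finType) (V A : {set D}) (TT : {set {set T}}) (Dl : nat)
   (P : pred {ffun D -> option T}) :
  #|A| = Dl -> (forall B, B \in TT -> #|B| = Dl) ->
  #|[set f in Inj (A :|: V) | P (rst f V) && (img f A \in TT)]|
    <= #|TT| * Dl ^ Dl * #|[set g in Inj V | P g]|.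
Proof.
move=> cA cTT.
set F := [set f in _ | _].
set G := [set g in Inj V | P g].
pose Hs (B : {set T}) := setXn (fun x : D => if x \in A then Some @: B else [set None]).
set H := \bigcup_(B in TT) Hs B.
pose phi (f : {ffun D -> option T}) := (rst f V, rst f A).
have injphi : {in F &, injective phi}.
  move=> f1 f2; rewrite !inE => /andP [/pinjP [A1 _] _] /andP [/pinjP [B1 _] _] [e1 e2].
  apply/ffunP => y.
  move/ffunP: e1 => /(_ y); move/ffunP: e2 => /(_ y); rewrite !ffunE.
  case: (boolP (y \in V)) => yV; first by [].
  case: (boolP (y \in A)) => yA; first by [].
  have nyW : y \notin A :|: V by rewrite inE negb_or yA yV.
  move: (A1 y) (B1 y); rewrite (negbTE nyW).
  by move/negbFE/eqP => -> /negbFE/eqP ->.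
have sub : phi @: F \subset setX G H.
  apply/subsetP => p /imsetP [f]; rewrite inE => /andP [fI /andP [Pf TTf]] ->.
  rewrite inE /=; apply/andP; split.
    by rewrite inE Pf andbT; exact: rst_Inj (subsetUr _ _) fI.
  apply/bigcupP; exists (img f A) => //.
  apply/setXnP => x; rewrite /rst ffunE; case: ifP => xA; last by rewrite inE.
  move/InjP: fI => [A1 _]; move: (A1 x); rewrite inE xA /=.
  case e: (f x) => [t|] // _.
  apply/imsetP; exists t => //; rewrite inE; apply/imsetP; exists x => //.
rewrite -(card_in_imset injphi); apply: (leq_trans (subset_leq_card sub)).
rewrite cardsX mulnC leq_mul2r; apply/orP; right.
apply: (leq_trans (card_bigcup_le _ _)).
rewrite -sum_nat_const leq_sum // => B BT.
rewrite cardsXn (eq_bigr (fun x => if x \in A then Dl else 1)); last first.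
  move=> x _; case: ifP => _; last by rewrite cards1.
  by rewrite card_imset ?cTT //; exact: Some_inj.
by rewrite -big_mkcond prod_nat_const cA.
Qed.

Lemma phase1 (D T : finType) (TT : {set {set T}}) (Dl : nat) :
  (forall B, B \in TT -> #|B| = Dl) ->
  forall n (J : {set {set D}}), #|J| = n -> (forall A, A \in J -> #|A| = Dl) ->
  (forall A B, A \in J -> B \in J -> A != B -> [disjoint A & B]) ->
  #|cover J| = Dl * n /\
  #|[set f in Inj (cover J) | [forall A in J, img f A \in TT]]| <= (#|TT| * Dl ^ Dl) ^ n.
Proof.
move=> cTT; elim=> [|n IH] J cJ sJ dJ.
  have -> : J = set0 by apply/eqP; rewrite -cards_eq0 cJ.
  rewrite /cover big_set0 cards0 muln0 expn0; split => //.
  rewrite -(cards1 ([ffun => None] : {ffun D -> option T})).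
  apply: subset_leq_card; apply/subsetP => f; rewrite inE => /andP [/InjP [A1 _] _].
  rewrite inE; apply/eqP/ffunP => x; rewrite ffunE.
  by move: (A1 x); rewrite inE => /negbFE/eqP.
have : (0 < #|J|)%N by rewrite cJ.
case/card_gt0P => A AJ.
set J' := J :\ A.
have cJ' : #|J'| = n by move: cJ; rewrite (cardsD1 A J) AJ add1n => -[].
have sJ' : forall B, B \in J' -> #|B| = Dl.
  by move=> B; rewrite inE => /andP [_ /sJ].
have dJ' : forall B C, B \in J' -> C \in J' -> B != C -> [disjoint B & C].
  by move=> B C; rewrite !inE => /andP [_ BJ] /andP [_ CJ]; apply: dJ.
have [IH1 IH2] := IH J' cJ' sJ' dJ'.
have ecov : cover J = A :|: cover J' by rewrite /cover (big_setD1 A AJ).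
have dA : [disjoint A & cover J'].
  apply: bigcup_disjoint => B; rewrite inE => /andP [nBA BJ].
  by apply: dJ AJ BJ _; move: nBA; rewrite inE eq_sym.
split.
  by rewrite ecov; move: (leq_card_setU A (cover J')) => [_]; rewrite dA => /eqP ->;
     rewrite IH1 (sJ A AJ) mulnS.
rewrite ecov.
set C' := fun g : {ffun D -> option T} => [forall B in J', img g B \in TT].
apply: (@leq_trans #|[set f in Inj (A :|: cover J') | C' (rst f (cover J')) && (img f A \in TT)]|).
  apply: subset_leq_card; apply/subsetP => f; rewrite !inE => /andP [fI /forallP Hf].
  rewrite fI /=; apply/andP; split; last by have := Hf A; rewrite AJ.
  apply/forallP => B; apply/implyP => BJ'.
  have BJ : B \in J by move: BJ'; rewrite inE => /andP [].
  rewrite img_rst; first by have := Hf B; rewrite BJ.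
  by apply: bigcup_sup BJ'.
apply: (leq_trans (block_le _ _ (sJ A AJ) cTT)).
by rewrite expnS leq_mul2l IH2 orbT.
Qed.

Lemma ffact_split n a b : n ^_ (a + b) = n ^_ a * (n - a) ^_ b.
Proof.
elim: b => [|b IH]; first by rewrite addn0 ffactn0 muln1.
by rewrite addnS ffactnSr IH ffactnSr subnDA mulnA.
Qed.

Definition liftf (D T : finType) (f : {ffun D -> T}) : {ffun D -> option T} :=
  [ffun x => Some (f x)].

Lemma liftf_inj (D T : finType) : injective (@liftf D T).
Proof. by move=> f g e; apply/ffunP => x; move/ffunP: e => /(_ x); rewrite !ffunE => -[]. Qed.

Lemma img_liftf (D T : finType) (f : {ffun D -> T}) A : img (liftf f) A = f @: A.
Proof.
apply/setP => t; rewrite inE; apply/imsetP/imsetP => [[x xA]|[x xA ->]].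
  by rewrite ffunE => -[->]; exists x.
by exists x; rewrite // ffunE.
Qed.

Lemma EJ_bound (D T : finType) (TT : {set {set T}}) (Dl : nat) (J : {set {set D}}) :
  (forall B, B \in TT -> #|B| = Dl) -> (forall A, A \in J -> #|A| = Dl) ->
  (forall A B, A \in J -> B \in J -> A != B -> [disjoint A & B]) ->
  #|[set f : {ffun D -> T} | injectiveb f && [forall A in J, f @: A \in TT]]|
     * #|T| ^_ (Dl * #|J|) <= (#|TT| * Dl ^ Dl) ^ #|J| * #|T| ^_ #|D|.
Proof.
move=> cTT sJ dJ.
have [c1 c2] := phase1 cTT (erefl #|J|) sJ dJ.
set U := cover J.
set C := fun g : {ffun D -> option T} => [forall A in J, img g A \in TT].
have HC : forall (V : {set D}) (f : {ffun D -> option T}), U \subset V -> C (rst f V) = C f.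
  move=> V f sUV; apply: eq_forallb => A; case: (boolP (A \in J)) => //= AJ.
  rewrite img_rst //; apply: subset_trans sUV; exact: bigcup_sup AJ.
have uD : (#|U| <= #|D|)%N by rewrite -cardsT subset_leq_card // subsetT.
have := phase2 HC (n := #|D| - #|U|) (subsetT U).
rewrite cardsT subnKC // => /(_ erefl) P2.
have E1 : (#|[set f : {ffun D -> T} | injectiveb f && [forall A in J, f @: A \in TT]]|
          <= #|[set f in Inj setT | C f]|)%N.
  rewrite -(card_imset _ (@liftf_inj D T)); apply: subset_leq_card.
  apply/subsetP => g /imsetP [f]; rewrite inE => /andP [/injectiveP finj Hf] ->.
  rewrite inE; apply/andP; split.
    apply/InjP; split => [x|x y _]; first by rewrite ffunE inE.
    by rewrite !ffunE => -[/finj].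
  by apply/forallP => A; rewrite img_liftf; move/forallP: Hf => /(_ A).
have -> : (Dl * #|J|)%N = #|U| by rewrite c1.
have -> : #|T| ^_ #|D| = #|T| ^_ #|U| * (#|T| - #|U|) ^_ (#|D| - #|U|)
  by rewrite -ffact_split subnKC.
rewrite [X in (_ <= X)%N]mulnCA [X in (_ <= X)%N]mulnC.
rewrite leq_mul2r; apply/orP; right.
apply: leq_trans E1 _; apply: leq_trans P2 _.
by rewrite leq_mul2r c2 orbT.
Qed.

Local Open Scope ring_scope.

Lemma ffact_lb (R : realType) (m N : nat) (mu : R) :
  0 < mu -> m%:R <= (1 - mu) * N%:R -> (mu * N%:R) ^+ m <= (N ^_ m)%:R.
Proof.
move=> mu0 hm.
have mN : (m <= N)%N.
  by rewrite -(ler_nat R); apply: (le_trans hm); rewrite ler_piMl ?ler0n //; lra.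
rewrite ffact_prod natr_prod -[m in X in X <= _]card_ord -prodr_const.
apply: ler_prod => i _; apply/andP; split.
  by rewrite mulr_ge0 ?ler0n // ltW.
have im : (i < N)%N by apply: leq_trans (ltn_ord i) mN.
rewrite natrB ?(ltnW im) //.
have h1 : ((i.+1)%:R : R) <= m%:R by rewrite ler_nat (ltn_ord i).
rewrite -addn1 natrD in h1.
move: hm; rewrite mulrBl mul1r => hm.
lra.
Qed.

Lemma EJ_real (R : realType) (D T : finType) (TT : {set {set T}}) (Dl : nat)
   (J : {set {set D}}) (muS muT q : R) :
  0 < muS -> 0 <= q ->
  (forall B, B \in TT -> #|B| = Dl) -> (forall A, A \in J -> #|A| = Dl) ->
  (forall A B, A \in J -> B \in J -> A != B -> [disjoint A & B]) ->
  (Dl * #|J|)%:R <= (1 - muS) * #|T|%:R -> (0 < #|T|)%N ->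
  #|TT|%:R <= muT * #|T|%:R ^+ Dl ->
  muT * Dl%:R ^+ Dl = q * muS ^+ Dl ->
  (#|[set f : {ffun D -> T} | injectiveb f && [forall A in J, f @: A \in TT]]|%:R : R)
     <= q ^+ #|J| * (#|T| ^_ #|D|)%:R.
Proof.
move=> muS0 q0 cTT sJ dJ hm N0 hTT hmu.
have H := EJ_bound cTT sJ dJ.
move: H; rewrite -(ler_nat R) !natrM !natrX => H.
set E := (#|_|%:R : R) in H *.
set N := (#|T|%:R : R) in hm hTT H *.
have Npos : 0 < N by rewrite ltr0n.
set X := (muS * N) ^+ (Dl * #|J|).
have X0 : 0 < X by rewrite exprn_gt0 // mulr_gt0.
have L1 : X <= (#|T| ^_ (Dl * #|J|))%:R by apply: ffact_lb.
have L2 : (#|TT|%:R * Dl%:R ^+ Dl) <= q * (muS * N) ^+ Dl.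
  rewrite exprMn mulrA -hmu mulrAC.
  by apply: ler_wpM2r => //; rewrite exprn_ge0 ?ler0n.
have L3 : (#|TT|%:R * Dl%:R ^+ Dl) ^+ #|J| <= q ^+ #|J| * X.
  apply: le_trans (lerXn2r #|J| _ _ L2) _.
  - by rewrite nnegrE mulr_ge0 // exprn_ge0 // ler0n.
  - by rewrite nnegrE mulr_ge0 // exprn_ge0 // mulr_ge0 // ltW.
  by rewrite exprMn -exprM.
rewrite -(ler_pM2r X0).
apply: (le_trans (ler_wpM2l _ L1)); first by rewrite ler0n.
apply: (le_trans H).
rewrite mulrAC; apply: ler_wpM2r; first by rewrite ler0n.
by rewrite natrM natrX.
Qed.

Unset Implicit Arguments.
Set Strict Implicit.
Theorem lemma11p9 (R : realType) (Delta : nat) (beta muS : R) :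
  (0 < Delta)%N -> 0 < beta -> 0 < muS ->
  exists muT : R, 0 < muT /\
    forall (S T : finType) (SS : {set {set S}}) (TT : {set {set T}}),
      (forall A, A \in SS -> #|A| = Delta) ->
      (forall A B, A \in SS -> B \in SS -> A != B -> [disjoint A & B]) ->
      (#|SS|%:R <= Delta%:R^-1 * (1 - muS) * #|T|%:R) ->
      (forall B, B \in TT -> #|B| = Delta) ->
      (#|TT|%:R <= muT * #|T|%:R ^+ Delta) ->
      (n_inj (fun f : {ffun S -> T} =>
                (1 - beta) * #|SS|%:R < #|image_family f SS :\: TT|%:R))%:R
        >= (1 - beta ^+ #|SS|) * (@n_inj S T (fun _ => true))%:R.
Proof.
move=> D0 b0 m0.
have [b1|b1] := leP 1 beta.
  exists 1; split => // S T SS TT _ _ _ _ _.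
  apply: le_trans (ler0n _ _); apply: mulr_le0_ge0; last exact: ler0n.
  by rewrite subr_le0 exprn_ege1.
pose r := Num.Def.archi_bound (beta^-1).
have hr : beta^-1 < r%:R by apply: archi_boundP; rewrite invr_ge0 ltW.
have br : 1 < beta * r%:R by rewrite -ltr_pdivrMl // mulr1.
pose q := (beta / 2) ^+ r.
have q0 : 0 <= q by rewrite exprn_ge0 // divr_ge0 // ltW.
have DR0 : 0 < (Delta%:R : R) by rewrite ltr0n.
pose muT := q * muS ^+ Delta / Delta%:R ^+ Delta.
exists muT; split.
  by rewrite divr_gt0 ?exprn_gt0 // mulr_gt0 // exprn_gt0 // divr_gt0.
move=> S T SS TT sSS dSS hk cTT hTT.
set k := #|SS|.
have [k0|kpos] := eqVneq k 0%N.
  by rewrite k0 expr0 subrr mul0r ler0n.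
have hk' : (Delta * k)%:R <= (1 - muS) * #|T|%:R.
  by rewrite natrM -ler_pdivlMl // mulrA.
have N0 : (0 < #|T|)%N.
  rewrite lt0n; apply/negP => /eqP N0; move: hk'; rewrite N0 mulr0 lern0 muln_eq0.
  by rewrite (negbTE kpos) orbF => /eqP D00; move: D0; rewrite D00.
have hmu : muT * Delta%:R ^+ Delta = q * muS ^+ Delta.
  by rewrite /muT divfK // expf_neq0 // lt0r_neq0.
set Pg := fun f : {ffun S -> T} => (1 - beta) * k%:R < #|image_family f SS :\: TT|%:R.
set bad := [set f : {ffun S -> T} | injectiveb f && ~~ Pg f].
have all_eq : (n_inj (fun _ : {ffun S -> T} => true) = n_inj Pg + #|bad|)%N.
  rewrite /n_inj -(cardsID [set f | Pg f] [set f : {ffun S -> T} | injectiveb f && true]).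
  by congr (_ + _); apply: eq_card => f; rewrite !inE andbT // andbC.
have allE : n_inj (fun _ : {ffun S -> T} => true) = (#|T| ^_ #|S|)%N.
  by rewrite /n_inj -card_inj_ffuns; apply: eq_card => f; rewrite !inE andbT.
pose E (J : {set {set S}}) := [set f : {ffun S -> T} | injectiveb f && [forall A in J, f @: A \in TT]].
pose Q (J : {set {set S}}) := (J \subset SS) && (beta * k%:R <= #|J|%:R).
have bad_sub : bad \subset \bigcup_(J | Q J) E J.
  apply/subsetP => f; rewrite inE => /andP [finj nP].
  set J := [set A in SS | f @: A \in TT].
  have sJ : J \subset SS by apply/subsetP => A; rewrite inE => /andP [].
  apply/bigcupP; exists J; last first.
    rewrite inE finj /=; apply/forallP => A; apply/implyP; rewrite inE => /andP [] //.
  apply/andP; split => //.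
  have eimg : image_family f SS :\: TT = (fun A : {set S} => f @: A) @: (SS :\: J).
    rewrite /image_family; apply/setP => B; rewrite !inE; apply/andP/imsetP.
      case => nB /imsetP [A AS eB]; exists A => //; rewrite !inE AS andbT -eB.
      by rewrite negb_and nB orbT.
    case => A; rewrite !inE => /andP [nAJ AS] ->; split.
      by move: nAJ; rewrite AS.
    by apply/imsetP; exists A.
  have cimg : #|image_family f SS :\: TT| = #|SS :\: J|.
    by rewrite eimg card_imset //; apply: imset_inj; apply/injectiveP.
  have cJ : (#|J| + #|SS :\: J|)%N = k.
    by rewrite -{1}(setIidPr sJ) cardsID.
  move: nP; rewrite /Pg -leNgt cimg mulrBl mul1r => nP.
  have cJR : (k%:R : R) = #|J|%:R + #|SS :\: J|%:R by rewrite -natrD cJ.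
  lra.
set all := (#|T| ^_ #|S|)%:R : R.
have all0 : 0 <= all by rewrite ler0n.
have c0 : 0 <= (beta / 2) ^+ k by rewrite exprn_ge0 // divr_ge0 // ltW.
have hb : (#|bad|%:R : R) <= beta ^+ k * all.
  apply: (@le_trans _ _ ((\sum_(J | Q J) #|E J|)%:R)).
    by rewrite ler_nat; apply: leq_trans (subset_leq_card bad_sub) (card_bigcup_le _ _).
  rewrite natr_sum.
  apply: (@le_trans _ _ (\sum_(J | Q J) ((beta / 2) ^+ k * all))).
    apply: ler_sum => J /andP [sJ hJ].
    have sJ' : forall A, A \in J -> #|A| = Delta by move=> A AJ; apply: sSS (subsetP sJ _ AJ).
    have dJ' : forall A B, A \in J -> B \in J -> A != B -> [disjoint A & B].
      by move=> A B AJ BJ; apply: dSS (subsetP sJ _ AJ) (subsetP sJ _ BJ).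
    have hDJ : (Delta * #|J|)%:R <= (1 - muS) * #|T|%:R.
      apply: le_trans hk'; rewrite ler_nat leq_mul2l subset_leq_card ?orbT //.
    apply: (le_trans (EJ_real m0 q0 cTT sJ' dJ' hDJ N0 hTT hmu)).
    apply: ler_wpM2r => //.
    rewrite /q -exprM; apply: ler_wiXn2l.
    - by rewrite divr_ge0 // ltW.
    - by rewrite ler_pdivrMr // mul1r; apply: (le_trans (ltW b1)); rewrite ler1n.
    rewrite -(ler_nat R) natrM.
    have kR : 0 < (k%:R : R) by rewrite ltr0n lt0n.
    apply: (@le_trans _ _ (k%:R * (beta * r%:R))).
      by rewrite -{1}(mulr1 k%:R) ler_wpM2l // ?ltW.
    rewrite (_ : k%:R * (beta * r%:R) = r%:R * (beta * k%:R)); last by ring.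
    by apply: ler_wpM2l => //; exact: ler0n.
  rewrite sumr_const -(mulr_natr ((beta / 2) ^+ k * all)).
  have cQ : (#|[pred J | Q J]| <= 2 ^ k)%N.
    rewrite -card_powerset; apply: subset_leq_card; apply/subsetP => J.
    by rewrite !inE => /andP [].
  apply: (@le_trans _ _ ((beta / 2) ^+ k * all * (2 ^ k)%:R)).
    by apply: ler_wpM2l; [rewrite mulr_ge0 | rewrite ler_nat].
  by rewrite natrX mulrAC -exprMn divfK // pnatr_eq0.
have e1 : ((n_inj (fun _ : {ffun S -> T} => true))%:R : R) = all by rewrite allE.
have e2 : ((n_inj (fun _ : {ffun S -> T} => true))%:R : R) = (n_inj Pg)%:R + #|bad|%:R
  by rewrite all_eq natrD.
rewrite e1 mulrBl mul1r; rewrite e1 in e2.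
by apply: le_trans (lerB (lexx all) hb) _; rewrite [in X in X - _]e2 addrK.
Qed.
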